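(* In the setting below, let $E$ and $E'$ be two bases of $q$-singular vectors indexed by the same totally ordered set $I$, and define $\Delta_{E,E'}:V^{\overline S}\to V^{\overline S}$ by $\Delta_{E,E'}(x+\bar r)=x+\theta(\delta_{E,E'}(x))+\bar r$ for $x\in V$, $\bar r\in\overline S$. Then $\Delta_{E,E'}$ is a bijective $K$-linear map fixing $\overline S$ elementwise, and $q_E^{\overline S,\overline T}(v)=q_{E'}^{\overline S,\overline T}(\Delta_{E,E'}(v))$ for all $v\in V^{\overline S}$; in particular $q_E^{\overline S,\overline T}$ and $q_{E'}^{\overline S,\overline T}$ are isomorphic.
   Context: Setting: $K$ division ring, $(\sigma,\varepsilon)$ admissible pair ($\sigma$ anti-automorphism, $\varepsilon^\sigma\varepsilon=1$, $t^{\sigma^2}=\varepsilon t\varepsilon^{-1}$). $K_{\sigma,\varepsilon}=\{t-t^\sigma\varepsilon\}$, $\overline K=K/K_{\sigma,\varepsilon}$, $\bar t$ class of $t$, $\bar t\circ\lambda=\overline{\lambda^\sigma t\lambda}$; $\{t:t=-t^\sigma\varepsilon\}/K_{\sigma,\varepsilon}$ is a right $K$-vector space under $\circ$. $q:V\to\overline K/\overline R$ ($V$ right $K$-vector space) is a non-trivial generalized $(\sigma,\varepsilon)$-quadratic form: $\overline R$ is a $\circ$-stable subgroup, $q(x\lambda)=q(x)\circ\lambda$ with $(\bar t+\overline R)\circ\lambda=\bar t\circ\lambda+\overline R$, and a trace-valued $(\sigma,\varepsilon)$-sesquilinear $f$ ($f(x\lambda,y\mu)=\lambda^\sigma f(x,y)\mu$,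 $f(y,x)=f(x,y)^\sigma\varepsilon$, $f(x,x)\in\{t+t^\sigma\varepsilon\}$) satisfies $q(x+y)=q(x)+q(y)+(\overline{f(x,y)}+\overline R)$; $q$ not identically $\overline R$ (then $\overline R$ is a $K$-subspace of the vector space above). $q$-singular: $q(x)=\overline R$. For a basis $E=(e_i)_{i\in I}$ of $q$-singular vectors, $g_E(\sum e_i\lambda_i,\sum e_j\mu_j)=\sum_{i<j}\lambda_i^\sigma f(e_i,e_j)\mu_j$, and $\delta_{E,E'}(x)=\overline{g_E(x,x)}-\overline{g_{E'}(x,x)}\in\overline R$. $\overline R=\overline S\oplus\overline T$ as $K$-vector spaces, $\theta:\overline R\to\overline S$ the projection along $\overline T$. $V^{\overline S}=V\oplus\overline S$ and $q_E^{\overline S,\overline T}(x+\bar r)=\overline{g_E(x,x)}+\bar r+\overline T\in\overline K/\overline T$. *)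

(* Defs.v *)
From HB Require Import structures.
From mathcomp Require Import all_boot all_order all_algebra.
From Stdlib Require Import ClassicalEpsilon.
Set Implicit Arguments. Unset Strict Implicit. Unset Printing Implicit Defensive.
Import Order.TTheory GRing.Theory.
Local Open Scope ring_scope.

(* A right K-vector space is modelled as a left module over the converse
   ring K^c; right scalar multiplication  x λ  is  rsc x λ. *)
Definition rsc (K : unitRingType) (V : lmodType K^c) (x : V) (l : K) : V :=
  (l : K^c) *: x.

Definition is_basis (K : unitRingType) (V : lmodType K^c) (I : eqType)
  (E : I -> V) : Prop :=
  (forall v : V, exists (s : seq I) (c : I -> K),
      uniq s /\ v = \sum_(i <- s) rsc (E i) (c i)) /\
  (forall (s : seq I) (c : I -> K), uniq s ->
      \sum_(i <- s) rsc (E i) (c i) = 0 -> forall i, i \in s -> c i = 0).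

Definition coords (K : unitRingType) (V : lmodType K^c) (I : eqType)
  (E : I -> V) (v : V) : seq I * (I -> K) :=
  epsilon (inhabits ([::], fun _ => 0))
    (fun p => uniq p.1 /\ v = \sum_(i <- p.1) rsc (E i) (p.2 i)).

Definition gE (K : unitRingType) (V : lmodType K^c) (d : Order.disp_t)
  (I : orderType d) (sigma : K -> K) (f : V -> V -> K) (E : I -> V)
  (x y : V) : K :=
  let (sx, cx) := coords E x in
  let (sy, cy) := coords E y in
  \sum_(i <- sx) \sum_(j <- sy | (i < j)%O)
     sigma (cx i) * f (E i) (E j) * cy j.

Definition deltaEE (K : unitRingType) (V : lmodType K^c) (d : Order.disp_t)
  (I : orderType d) (sigma : K -> K) (f : V -> V -> K) (Kbar : zmodType)
  (pi : K -> Kbar) (E E' : I -> V) (x : V) : Kbar :=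
  pi (gE sigma f E x x) - pi (gE sigma f E' x x).

(* Elements x + r of V^S = V ⊕ S are pairs (x, r) with r in S.
   Δ_{E,E'}(x + r) = x + θ(δ_{E,E'}(x)) + r. *)
Definition DeltaEE (K : unitRingType) (V : lmodType K^c) (d : Order.disp_t)
  (I : orderType d) (sigma : K -> K) (f : V -> V -> K) (Kbar : zmodType)
  (pi : K -> Kbar) (theta : Kbar -> Kbar) (E E' : I -> V) (p : V * Kbar)
  : V * Kbar :=
  (p.1, theta (deltaEE sigma f pi E E' p.1) + p.2).

(* q_E^{S,T}(x + r) = class(g_E(x,x)) + r + T  in Kbar/T (rhoT = quotient map) *)
Definition qES (K : unitRingType) (V : lmodType K^c) (d : Order.disp_t)
  (I : orderType d) (sigma : K -> K) (f : V -> V -> K) (Kbar : zmodType)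
  (pi : K -> Kbar) (QT : zmodType) (rhoT : Kbar -> QT) (E : I -> V)
  (p : V * Kbar) : QT :=
  rhoT (pi (gE sigma f E p.1 p.1) + p.2).

(* Main.v *)
Require Import Defs.
From Stdlib Require Import ClassicalEpsilon.
From HB Require Import structures.
From mathcomp Require Import all_boot all_order all_algebra.
Import Order.TTheory GRing.Theory.
Set Implicit Arguments. Unset Strict Implicit. Unset Printing Implicit Defensive.
Local Open Scope ring_scope.

Lemma morph0 (A B : zmodType) (phi : A -> B) :
  (forall a b, phi (a + b) = phi a + phi b) -> phi 0 = 0.
Proof. by move=> phiD; apply: (@addrI _ (phi 0)); rewrite -phiD !addr0. Qed.

Lemma morphN (A B : zmodType) (phi : A -> B) :
  (forall a b, phi (a + b) = phi a + phi b) -> forall a, phi (- a) = - phi a.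
Proof.
move=> phiD a; apply: (@addrI _ (phi a)); rewrite -phiD !subrr; exact: morph0.
Qed.

Lemma morphB (A B : zmodType) (phi : A -> B) :
  (forall a b, phi (a + b) = phi a + phi b) -> forall a b, phi (a - b) = phi a - phi b.
Proof. by move=> phiD a b; rewrite phiD (morphN phiD). Qed.

Lemma morph_sum (A B : zmodType) (phi : A -> B) (I : Type) (r : seq I) (P : pred I) F :
  (forall a b, phi (a + b) = phi a + phi b) ->
  phi (\sum_(i <- r | P i) F i) = \sum_(i <- r | P i) phi (F i).
Proof. by move=> phiD; apply: (big_morph phi phiD (morph0 phiD)). Qed.

Lemma sum_ext (I : eqType) (M : nmodType) (s u : seq I) (F : I -> M) :
  uniq s -> uniq u -> {subset s <= u} -> (forall i, i \notin s -> F i = 0) ->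
  \sum_(i <- u) F i = \sum_(i <- s) F i.
Proof.
move=> us uu su F0.
rewrite (bigID (mem s)) /= [X in _ + X]big1 ?addr0; last by move=> i /F0.
rewrite -big_filter; apply: perm_big; apply: uniq_perm; rewrite ?filter_uniq //.
by move=> i; rewrite mem_filter; case: (boolP (i \in s)) => // /su ->.
Qed.

Lemma sum_extP (I : eqType) (M : nmodType) (s u : seq I) (P : pred I) (F : I -> M) :
  uniq s -> uniq u -> {subset s <= u} -> (forall i, i \notin s -> F i = 0) ->
  \sum_(i <- u | P i) F i = \sum_(i <- s | P i) F i.
Proof.
move=> us uu su F0; rewrite big_mkcond [RHS]big_mkcond /=.
by apply: sum_ext => // i /F0 ->; case: (P i).
Qed.

Definition Gs (K : unitRingType) (V : lmodType K^c) (d : Order.disp_t)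
  (I : orderType d) (sigma : K -> K) (f : V -> V -> K) (E : I -> V)
  (s : seq I) (c : I -> K) : K :=
  \sum_(i <- s) \sum_(j <- s | (i < j)%O) sigma (c i) * f (E i) (E j) * c j.

Definition Xs (K : unitRingType) (V : lmodType K^c) (I : Type) (E : I -> V)
  (s : seq I) (c : I -> K) : V := \sum_(i <- s) rsc (E i) (c i).

Definition restr (I : eqType) (K : unitRingType) (s : seq I) (c : I -> K) :=
  fun i => if i \in s then c i else 0.

Lemma Gs_restr (K : unitRingType) (V : lmodType K^c) (d : Order.disp_t)
  (I : orderType d) (sigma : K -> K) (f : V -> V -> K) (E : I -> V) s u c :
  sigma 0 = 0 -> uniq s -> uniq u -> {subset s <= u} ->
  Gs sigma f E s c = Gs sigma f E u (restr s c).
Proof.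
move=> s0 us uu su; rewrite /Gs.
rewrite [RHS](@sum_ext _ _ s u) //; last first.
  by move=> i /negbTE hi; apply: big1 => j _; rewrite /restr hi s0 !mul0r.
apply: eq_big_seq => i is_; rewrite [RHS](@sum_extP _ _ s u) //; last first.
  by move=> j /negbTE hj; rewrite /restr hj mulr0.
rewrite big_seq_cond [RHS]big_seq_cond; apply: eq_bigr => j /andP[js _]; by rewrite /restr is_ js.
Qed.

Lemma Xs_restr (K : unitRingType) (V : lmodType K^c) (I : eqType) (E : I -> V) s u c :
  uniq s -> uniq u -> {subset s <= u} ->
  Xs E s c = Xs E u (restr s c).
Proof.
move=> us uu su; rewrite /Xs [RHS](@sum_ext _ _ s u) //; last first.
  by move=> i /negbTE hi; rewrite /restr hi /rsc scale0r.
by apply: eq_big_seq => i is_; rewrite /restr is_.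
Qed.

Lemma Xs_indep (K : unitRingType) (V : lmodType K^c) (I : eqType) (E : I -> V) u c c' :
  is_basis E -> uniq u -> Xs E u c = Xs E u c' -> {in u, c =1 c'}.
Proof.
move=> [_ ind] uu eq i iu; apply/eqP; rewrite -subr_eq0; apply/eqP.
apply: (ind u (fun i => c i - c' i)) => //.
rewrite /rsc; under eq_bigr => j _ do rewrite scalerBl.
by rewrite sumrB; apply/eqP; rewrite subr_eq0; apply/eqP.
Qed.

Lemma Gs_inv (K : unitRingType) (V : lmodType K^c) (d : Order.disp_t)
  (I : orderType d) (sigma : K -> K) (f : V -> V -> K) (E : I -> V) s s' c c' :
  sigma 0 = 0 -> is_basis E -> uniq s -> uniq s' -> Xs E s c = Xs E s' c' ->
  Gs sigma f E s c = Gs sigma f E s' c'.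
Proof.
move=> s0 bE us us' eqX.
set u := undup (s ++ s').
have uu : uniq u by apply: undup_uniq.
have su : {subset s <= u} by move=> i hi; rewrite mem_undup mem_cat hi.
have su' : {subset s' <= u} by move=> i hi; rewrite mem_undup mem_cat hi orbT.
rewrite (Gs_restr f E c s0 us uu su) (Gs_restr f E c' s0 us' uu su').
have eqc : {in u, restr s c =1 restr s' c'}.
  apply: (Xs_indep bE uu).
  transitivity (Xs E s c); first by symmetry; exact: Xs_restr.
  rewrite eqX; exact: Xs_restr.
rewrite /Gs; apply: eq_big_seq => i iu; rewrite (eqc i iu).
rewrite big_seq_cond [RHS]big_seq_cond; apply: eq_bigr => j /andP[ju _].
by rewrite (eqc j ju).
Qed.

Lemma gE_rep (K : unitRingType) (V : lmodType K^c) (d : Order.disp_t)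
  (I : orderType d) (sigma : K -> K) (f : V -> V -> K) (E : I -> V) s c x :
  sigma 0 = 0 -> is_basis E -> uniq s -> x = Xs E s c ->
  gE sigma f E x x = Gs sigma f E s c.
Proof.
move=> s0 bE us ->; rewrite /gE.
have := @epsilon_spec _ (inhabits ([::], fun _ => 0))
  (fun p => uniq p.1 /\ Xs E s c = \sum_(i <- p.1) rsc (E i) (p.2 i)).
rewrite -/(coords E (Xs E s c)).
case: (coords E (Xs E s c)) => s1 c1 /= [|u1 eq1].
  case: bE => [span _]; have [s2 [c2 [u2 e2]]] := span (Xs E s c); by exists (s2, c2).
symmetry; apply: Gs_inv => //.
Qed.

Definition Ms (K : unitRingType) (V : lmodType K^c) (d : Order.disp_t)
  (I : orderType d) (sigma : K -> K) (f : V -> V -> K) (E : I -> V)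
  (s : seq I) (a b : I -> K) : K :=
  \sum_(i <- s) \sum_(j <- s | (i < j)%O) sigma (a i) * f (E i) (E j) * b j.

Lemma Gs_add (K : unitRingType) (V : lmodType K^c) (d : Order.disp_t)
  (I : orderType d) (sigma : K -> K) (f : V -> V -> K) (E : I -> V) s a b :
  (forall a b, sigma (a + b) = sigma a + sigma b) ->
  Gs sigma f E s (fun i => a i + b i) =
  Gs sigma f E s a + Gs sigma f E s b + (Ms sigma f E s a b + Ms sigma f E s b a).
Proof.
move=> sD; rewrite /Gs /Ms -!big_split /=; apply: eq_bigr => i _.
rewrite -!big_split /=; apply: eq_bigr => j _.
rewrite sD !mulrDl !mulrDr -!addrA; congr (_ + _).
by rewrite [RHS]addrC addrA.
Qed.

Lemma f_Xs (K : unitRingType) (V : lmodType K^c) (I : Type)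
  (sigma : K -> K) (f : V -> V -> K) (E : I -> V) u a b :
  (forall x y z, f (x + y) z = f x z + f y z) ->
  (forall x y z, f x (y + z) = f x y + f x z) ->
  (forall x y l m, f (rsc x l) (rsc y m) = sigma l * f x y * m) ->
  f (Xs E u a) (Xs E u b) =
  \sum_(i <- u) \sum_(j <- u) sigma (a i) * f (E i) (E j) * b j.
Proof.
move=> fDl fDr fZ; rewrite /Xs.
rewrite (morph_sum (phi := fun x => f x (\sum_(j <- u) rsc (E j) (b j)))) //.
apply: eq_bigr => i _; rewrite (morph_sum (phi := f (rsc (E i) (a i)))) //.
by apply: eq_bigr => j _; rewrite fZ.
Qed.

Lemma split_lt (d : Order.disp_t) (I : orderType d) (M : zmodType) (u : seq I)
  (F : I -> I -> M) i :
  F i i = 0 ->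
  \sum_(j <- u) F i j = \sum_(j <- u | (i < j)%O) F i j + \sum_(j <- u | (j < i)%O) F i j.
Proof.
move=> Fii; rewrite (bigID (fun j => (i < j)%O)) /=; congr (_ + _).
rewrite (bigID (fun j => j == i)) /= big1 ?add0r; last by move=> j /andP[_ /eqP ->].
apply: (eq_bigl (fun j => (j < i)%O)) => j /=. by rewrite [RHS]lt_def leNgt andbC eq_sym.
Qed.

Lemma polar (K : unitRingType) (V : lmodType K^c) (d : Order.disp_t)
  (I : orderType d) (sigma : K -> K) (eps : K) (f : V -> V -> K) (E : I -> V)
  (Kbar : zmodType) (pi : K -> Kbar) u a b :
  (forall a b, sigma (a + b) = sigma a + sigma b) ->
  (forall a b, sigma (a * b) = sigma b * sigma a) ->
  (forall t, sigma (sigma t) = eps * t * eps^-1) ->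
  eps^-1 * eps = 1 ->
  (forall x y, f y x = sigma (f x y) * eps) ->
  (forall x y z, f (x + y) z = f x z + f y z) ->
  (forall x y z, f x (y + z) = f x y + f x z) ->
  (forall x y l m, f (rsc x l) (rsc y m) = sigma l * f x y * m) ->
  (forall i, f (E i) (E i) = 0) ->
  (forall a b, pi (a + b) = pi a + pi b) ->
  (forall t, pi t = pi (sigma t * eps)) ->
  pi (Gs sigma f E u (fun i => a i + b i)) =
  pi (Gs sigma f E u a) + pi (Gs sigma f E u b) + pi (f (Xs E u a) (Xs E u b)).
Proof.
move=> sD sM s2 epsV fH fDl fDr fZ fii piD piS.
have s0 : sigma 0 = 0 by apply: (@addrI _ (sigma 0)); rewrite -sD !addr0.
rewrite Gs_add // !piD; congr (_ + _).
rewrite (f_Xs (sigma := sigma)) //.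
rewrite (eq_bigr (fun i => \sum_(j <- u | (i < j)%O) sigma (a i) * f (E i) (E j) * b j
   + \sum_(j <- u | (j < i)%O) sigma (a i) * f (E i) (E j) * b j)); last first.
  move=> i _; have := (@split_lt d I K u (fun i j => sigma (a i) * f (E i) (E j) * b j) i); rewrite fii mulr0 mul0r; move=> h; exact: h.
rewrite big_split /= piD /Ms; congr (_ + _).
rewrite [in RHS](eq_bigr (fun i => \sum_(j <- u)
   (if (j < i)%O then sigma (a i) * f (E i) (E j) * b j else 0))); last first.
  by move=> i _; rewrite big_mkcond.
rewrite [in RHS]exchange_big /=.
rewrite (morph_sum (phi := pi)) // [RHS](morph_sum (phi := pi)) //.
apply: eq_bigr => i _.
rewrite [RHS](morph_sum (phi := pi)) // big_mkcond (morph_sum (phi := pi)) //.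
apply: eq_bigr => j _; case: ifP => _; last by rewrite (morph0 piD).
rewrite [RHS]piS !sM s2 (fH (E j) (E i)) -!mulrA; congr (pi (_ * _)); congr (_ * _).
by rewrite epsV mulr1.
Qed.

Lemma Gs_scale (K : unitRingType) (V : lmodType K^c) (d : Order.disp_t)
  (I : orderType d) (sigma : K -> K) (f : V -> V -> K) (E : I -> V) u c l :
  (forall a b, sigma (a * b) = sigma b * sigma a) ->
  Gs sigma f E u (fun i => c i * l) = sigma l * Gs sigma f E u c * l.
Proof.
move=> sM; rewrite /Gs mulr_sumr mulr_suml; apply: eq_bigr => i _.
rewrite mulr_sumr mulr_suml; apply: eq_bigr => j _.
by rewrite sM -!mulrA.
Qed.

Lemma Xs_scale (K : unitRingType) (V : lmodType K^c) (I : Type) (E : I -> V) u c l :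
  rsc (Xs E u c) l = Xs E u (fun i => c i * l).
Proof.
by rewrite /rsc /Xs scaler_sumr; apply: eq_bigr => i _; rewrite scalerA.
Qed.

Lemma Xs_add (K : unitRingType) (V : lmodType K^c) (I : Type) (E : I -> V) u a b :
  Xs E u a + Xs E u b = Xs E u (fun i => a i + b i).
Proof.
by rewrite /Xs -big_split; apply: eq_bigr => i _; rewrite /rsc scalerDl.
Qed.

Lemma zmod1 (M : zmodType) (a b c a' b' : M) :
  (a + b + c) - (a' + b' + c) = (a - a') + (b - b').
Proof. by rewrite opprD addrACA subrr addr0 opprD addrACA. Qed.

Lemma zmod2 (M : zmodType) (A A' r t : M) :
  (A + r) - (A' + (t + r)) = (A - A') - t.
Proof. by rewrite [t + r]addrC addrA opprD addrA opprD addrACA subrr addr0. Qed.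

Theorem mainTheorem17
  (* K a division ring *)
  (K : unitRingType)
  (K_div : forall x : K, x != 0 -> x \is a GRing.unit)
  (* (σ, ε) admissible pair, σ an anti-automorphism *)
  (sigma : K -> K) (eps : K)
  (sigmaD : forall a b, sigma (a + b) = sigma a + sigma b)
  (sigmaM : forall a b, sigma (a * b) = sigma b * sigma a)
  (sigma1 : sigma 1 = 1)
  (sigma_bij : bijective sigma)
  (eps_adm : sigma eps * eps = 1)
  (sigma2 : forall t, sigma (sigma t) = eps * t * eps^-1)
  (* Kbar = K / K_{σ,ε}, with quotient map pi *)
  (Kbar : zmodType) (pi : K -> Kbar)
  (piD : forall a b, pi (a + b) = pi a + pi b)
  (pi_surj : forall r, exists t, pi t = r)
  (pi_ker : forall t, pi t = 0 <-> exists u, t = u - sigma u * eps)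
  (* the operation  t̄ ∘ λ = class(λ^σ t λ) *)
  (circ : Kbar -> K -> Kbar)
  (circE : forall t l, circ (pi t) l = pi (sigma l * t * l))
  (* Rbar : a ∘-stable subgroup of Kbar; Q = Kbar / Rbar with quotient map rho *)
  (Rb : Kbar -> Prop)
  (Rb0 : Rb 0) (RbB : forall a b, Rb a -> Rb b -> Rb (a - b))
  (Rb_circ : forall a l, Rb a -> Rb (circ a l))
  (Q : zmodType) (rho : Kbar -> Q)
  (rhoD : forall a b, rho (a + b) = rho a + rho b)
  (rho_surj : forall z, exists r, rho r = z)
  (rho_ker : forall r, rho r = 0 <-> Rb r)
  (* V a right K-vector space *)
  (V : lmodType K^c)
  (* f trace-valued (σ,ε)-sesquilinear *)
  (f : V -> V -> K)
  (fDl : forall x y z, f (x + y) z = f x z + f y z)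
  (fDr : forall x y z, f x (y + z) = f x y + f x z)
  (fZ : forall x y l m, f (rsc x l) (rsc y m) = sigma l * f x y * m)
  (f_herm : forall x y, f y x = sigma (f x y) * eps)
  (f_trace : forall x, exists t, f x x = t + sigma t * eps)
  (* q a non-trivial generalized (σ,ε)-quadratic form with values in Kbar/Rbar *)
  (q : V -> Q)
  (qZ : forall x l r, q x = rho r -> q (rsc x l) = rho (circ r l))
  (qD : forall x y, q (x + y) = q x + q y + rho (pi (f x y)))
  (q_nontriv : exists x, q x <> 0)
  (* Rbar = Sbar ⊕ Tbar as K-vector spaces *)
  (Sb Tb : Kbar -> Prop)
  (Sb0 : Sb 0) (SbB : forall a b, Sb a -> Sb b -> Sb (a - b))
  (Sb_circ : forall a l, Sb a -> Sb (circ a l))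
  (Tb0 : Tb 0) (TbB : forall a b, Tb a -> Tb b -> Tb (a - b))
  (Tb_circ : forall a l, Tb a -> Tb (circ a l))
  (RST : forall r, Rb r <-> exists s t, Sb s /\ Tb t /\ r = s + t)
  (ST0 : forall r, Sb r -> Tb r -> r = 0)
  (* θ : Rbar -> Sbar the projection along Tbar *)
  (theta : Kbar -> Kbar)
  (thetaP : forall r, Rb r -> Sb (theta r) /\ Tb (r - theta r))
  (* QT = Kbar / Tbar with quotient map rhoT *)
  (QT : zmodType) (rhoT : Kbar -> QT)
  (rhoTD : forall a b, rhoT (a + b) = rhoT a + rhoT b)
  (rhoT_surj : forall z, exists r, rhoT r = z)
  (rhoT_ker : forall r, rhoT r = 0 <-> Tb r)
  (* E, E' bases of q-singular vectors indexed by a totally ordered set I *)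
  (d : Order.disp_t) (I : orderType d) (E E' : I -> V)
  (E_basis : is_basis E) (E_sing : forall i, q (E i) = 0)
  (E'_basis : is_basis E') (E'_sing : forall i, q (E' i) = 0) :
  let Delta := DeltaEE sigma f pi theta E E' in
  (* Δ maps V^S into V^S *)
  (forall p, Sb p.2 -> Sb (Delta p).2) /\
  (* bijective on V^S *)
  (forall p p', Sb p.2 -> Sb p'.2 -> Delta p = Delta p' -> p = p') /\
  (forall p', Sb p'.2 -> exists p, Sb p.2 /\ Delta p = p') /\
  (* K-linear: additive and compatible with (x + r)λ = xλ + r∘λ *)
  (forall p p', Sb p.2 -> Sb p'.2 ->
     Delta (p.1 + p'.1, p.2 + p'.2) =
     ((Delta p).1 + (Delta p').1, (Delta p).2 + (Delta p').2)) /\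
  (forall p l, Sb p.2 ->
     Delta (rsc p.1 l, circ p.2 l) = (rsc (Delta p).1 l, circ (Delta p).2 l)) /\
  (* fixes Sbar elementwise *)
  (forall r, Sb r -> Delta (0, r) = (0, r)) /\
  (* q_E^{S,T} = q_E'^{S,T} ∘ Δ *)
  (forall p, Sb p.2 ->
     qES sigma f pi rhoT E p = qES sigma f pi rhoT E' (Delta p)).
Proof.
move=> Delta.
have s0 : sigma 0 = 0 by apply: (@addrI _ (sigma 0)); rewrite -sigmaD !addr0.
have pi0 : pi 0 = 0 := morph0 piD.
have rho0 : rho 0 = 0 := morph0 rhoD.
have eps_neq0 : eps != 0.
  apply/eqP => e0; move: eps_adm; rewrite e0 mulr0 => /eqP; by rewrite eq_sym oner_eq0.
have epsV : eps^-1 * eps = 1 by apply: mulVr; apply: K_div.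
have piS : forall t, pi t = pi (sigma t * eps).
  move=> t; have : pi (t - sigma t * eps) = 0 by apply/pi_ker; exists t.
  by rewrite (morphB piD) => /eqP; rewrite subr_eq0 => /eqP.
have circ0 : forall l, circ 0 l = 0.
  by move=> l; rewrite -pi0 circE mulr0 mul0r.
have circD : forall a b l, circ (a + b) l = circ a l + circ b l.
  move=> a b l; have [ta <-] := pi_surj a; have [tb <-] := pi_surj b.
  by rewrite -piD !circE -piD mulrDr mulrDl.
have qZ0 : forall x l, q x = 0 -> q (rsc x l) = 0.
  by move=> x l qx; rewrite (qZ x l 0) ?circ0 ?rho0.
have f00 : f 0 0 = 0 by apply: (@addrI _ (f 0 0)); rewrite -fDl !addr0.
have q00 : q 0 = 0.
  have h := qD 0 0; rewrite !addr0 f00 pi0 rho0 addr0 in h.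
  by apply: (@addrI _ (q 0)); rewrite addr0 -h.
have fii : forall e, q e = 0 -> f e e = 0.
  move=> e qe; apply/eqP; apply/negPn/negP => cn0.
  have cU := K_div _ cn0.
  have rk : forall k, rho (pi k) = 0.
    move=> k.
    have := qD (rsc e 1) (rsc e ((f e e)^-1 * k)).
    rewrite /rsc -scalerDl -/(rsc e _) -!/(rsc e _) !qZ0 // fZ sigma1 mul1r.
    by rewrite mulrA mulrV // mul1r !add0r => <-.
  case: q_nontriv => x; have [r <-] := rho_surj (q x).
  by have [t <-] := pi_surj r; rewrite rk.
have key : forall E0 : I -> V, is_basis E0 -> (forall i, q (E0 i) = 0) ->
  (forall x y, pi (gE sigma f E0 (x + y) (x + y)) =
     pi (gE sigma f E0 x x) + pi (gE sigma f E0 y y) + pi (f x y)) /\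
  (forall x l, pi (gE sigma f E0 (rsc x l) (rsc x l)) = circ (pi (gE sigma f E0 x x)) l) /\
  (forall x, rho (pi (gE sigma f E0 x x)) = q x).
  move=> E0 bE sE.
  have rep : forall x, exists s c, uniq s /\ x = Xs E0 s c.
    by case: bE => [span _] x; exact: span.
  have P1 : forall x y, pi (gE sigma f E0 (x + y) (x + y)) =
     pi (gE sigma f E0 x x) + pi (gE sigma f E0 y y) + pi (f x y).
    move=> x y; have [s [c [us ->]]] := rep x; have [s' [c' [us' ->]]] := rep y.
    set u := undup (s ++ s').
    have uu : uniq u by apply: undup_uniq.
    have su : {subset s <= u} by move=> i hi; rewrite mem_undup mem_cat hi.
    have su' : {subset s' <= u} by move=> i hi; rewrite mem_undup mem_cat hi orbT.
    rewrite (Xs_restr E0 c us uu su) (Xs_restr E0 c' us' uu su') Xs_add.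
    rewrite (gE_rep f s0 bE uu erefl) (gE_rep f s0 bE uu erefl) (gE_rep f s0 bE uu erefl).
    apply: polar => //; move=> i; exact: fii.
  have P2 : forall x l, pi (gE sigma f E0 (rsc x l) (rsc x l)) = circ (pi (gE sigma f E0 x x)) l.
    move=> x l; have [s [c [us ->]]] := rep x.
    rewrite Xs_scale (gE_rep f s0 bE us erefl) (gE_rep f s0 bE us erefl).
    by rewrite circE Gs_scale.
  split => //; split => //.
  have P0 : pi (gE sigma f E0 0 0) = 0.
    have h := P1 0 0; rewrite addr0 f00 pi0 addr0 in h.
    by apply: (@addrI _ (pi (gE sigma f E0 0 0))); rewrite addr0 -h.
  have PE : forall i, pi (gE sigma f E0 (E0 i) (E0 i)) = 0.
    move=> i; have -> : E0 i = Xs E0 [:: i] (fun _ => 1).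
      by rewrite /Xs big_cons big_nil addr0 /rsc scale1r.
    by rewrite (gE_rep f s0 bE _ erefl) // /Gs big_cons big_nil big_cons ltxx big_nil !addr0 pi0.
  move=> x; have [s [c [_ ->]]] := rep x.
  elim: s => [|i s IH]; first by rewrite /Xs big_nil P0 rho0 q00.
  rewrite /Xs big_cons -/(Xs E0 s c) P1 qD !rhoD IH P2 PE circ0 rho0 qZ0 //.
have [P1E [P2E P3E]] := key E E_basis E_sing.
have [P1E' [P2E' P3E']] := key E' E'_basis E'_sing.
set dl := deltaEE sigma f pi E E'.
have dlE : forall x, dl x = pi (gE sigma f E x x) - pi (gE sigma f E' x x) by [].
have DE : forall p, Delta p = (p.1, theta (dl p.1) + p.2) by [].
have Rbd : forall x, Rb (dl x).
  by move=> x; apply/rho_ker; rewrite dlE (morphB rhoD) P3E P3E' subrr.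
have dlD : forall x y, dl (x + y) = dl x + dl y.
  by move=> x y; rewrite !dlE P1E P1E' zmod1.
have dlZ : forall x l, dl (rsc x l) = circ (dl x) l.
  by move=> x l; rewrite !dlE P2E P2E' -(morphB (fun a b => circD a b l)).
have dl0 : dl 0 = 0.
  by have h := dlD 0 0; rewrite addr0 in h; apply: (@addrI _ (dl 0)); rewrite addr0 -h.
have SbD : forall a b, Sb a -> Sb b -> Sb (a + b).
  by move=> a b ha hb; have := SbB a (0 - b) ha (SbB 0 b Sb0 hb); rewrite sub0r opprK.
have TbD : forall a b, Tb a -> Tb b -> Tb (a + b).
  by move=> a b ha hb; have := TbB a (0 - b) ha (TbB 0 b Tb0 hb); rewrite sub0r opprK.
have RbD : forall a b, Rb a -> Rb b -> Rb (a + b).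
  by move=> a b ha hb; have := RbB a (0 - b) ha (RbB 0 b Rb0 hb); rewrite sub0r opprK.
have thetaU : forall r a, Rb r -> Sb a -> Tb (r - a) -> theta r = a.
  move=> r a hr ha hra; have [hs ht] := thetaP r hr.
  apply/eqP; rewrite -subr_eq0; apply/eqP; apply: ST0; first exact: SbB.
  have -> : theta r - a = (r - a) - (r - theta r) by rewrite opprB [RHS]addrC addrA subrK.
  exact: TbB.
have thetaD : forall a b, Rb a -> Rb b -> theta (a + b) = theta a + theta b.
  move=> a b ha hb; have [sa ta] := thetaP a ha; have [sb tb] := thetaP b hb.
  apply: thetaU; [exact: RbD | exact: SbD | ].
  by rewrite opprD addrACA; apply: TbD.
have thetaC : forall a l, Rb a -> theta (circ a l) = circ (theta a) l.
  move=> a l ha; have [sa ta] := thetaP a ha.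
  apply: thetaU; [exact: Rb_circ | exact: Sb_circ | ].
  by rewrite -(morphB (fun a b => circD a b l)); apply: Tb_circ.
have theta0 : theta 0 = 0 by apply: thetaU => //; rewrite subrr.
split.
  by move=> p hp; rewrite DE /=; apply: SbD => //; have [] := thetaP _ (Rbd p.1).
split.
  move=> [x r] [x' r'] /= _ _; rewrite !DE /= => [[ex er]]; subst x'.
  by move: er => /addrI ->.
split.
  move=> [x r] /= hr; exists (x, r - theta (dl x)); split => /=.
    by apply: SbB => //; have [] := thetaP _ (Rbd x).
  by rewrite DE /= addrC subrK.
split.
  move=> [x r] [x' r'] /= hr hr'; rewrite !DE /= dlD thetaD //.
  by rewrite addrACA.
split.
  by move=> [x r] l /= hr; rewrite !DE /= dlZ thetaC // circD.
split.
  by move=> r hr; rewrite DE /= dl0 theta0 add0r.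
move=> [x r] /= hr; rewrite DE /= /qES /=.
apply/eqP; rewrite -subr_eq0 -(morphB rhoTD) zmod2; apply/eqP/rhoT_ker.
by have [] := thetaP _ (Rbd x).
Qed.
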